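(* Let $A$ be an alternative algebra over a field $F$ with unit element $1$, admitting a derivation with invertible values $d$. Then: (a) if $L\neq 0$ is a one-sided (left or right) ideal of $A$, then $d(L)\neq 0$; (b) every nonzero proper left (respectively right) ideal of $A$ is both a minimal and a maximal left (respectively right) ideal of $A$; (c) if $I$ is a proper two-sided ideal of $A$, then $I^2=0$; (d) if $\operatorname{char}F\neq 2$ (i.e. $2A\neq 0$), then $A$ is simple.
   Context: An algebra $A$ is alternative if $(x,x,y)=0$ and $(x,y,y)=0$ for all $x,y\in A$, where $(x,y,z)=(xy)z-x(yz)$. An element $a$ of a unital alternative algebra is invertible if there is $b$ with $ab=ba=1$; $U$ denotes the set of invertible elements. A derivation with invertible values of $A$ is a nonzero derivation $d$ of $A$ such that for every $x\in A$ either $d(x)\in U$ or $d(x)=0$. A proper ideal is one different from $A$. *)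

(* Defs.v *)
From HB Require Import structures.
From mathcomp Require Import all_boot all_order all_algebra.
Set Implicit Arguments. Unset Strict Implicit. Unset Printing Implicit Defensive.
Import Order.TTheory GRing.Theory Num.Theory.
Local Open Scope ring_scope.

Section AltAlg.
Variables (F : fieldType) (A : lmodType F) (mul : A -> A -> A) (one : A).

Definition assoc (x y z : A) : A := mul (mul x y) z - mul x (mul y z).

Definition unital_alt_algebra : Prop :=
  [/\ (forall (a : F) (x y z : A), mul (a *: x + y) z = a *: mul x z + mul y z),
      (forall (a : F) (x y z : A), mul x (a *: y + z) = a *: mul x y + mul x z),
      (forall x : A, mul one x = x /\ mul x one = x),
      (forall x y : A, assoc x x y = 0) &
      (forall x y : A, assoc x y y = 0)].

Definition invertible (a : A) : Prop := exists b : A, mul a b = one /\ mul b a = one.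

Definition derivation (d : A -> A) : Prop :=
  [/\ (forall (a : F) (x y : A), d (a *: x + y) = a *: d x + d y) &
      (forall x y : A, d (mul x y) = mul (d x) y + mul x (d y))].

Definition deriv_inv_values (d : A -> A) : Prop :=
  [/\ derivation d, (exists x : A, d x <> 0) &
      (forall x : A, invertible (d x) \/ d x = 0)].

Definition subspace (L : A -> Prop) : Prop :=
  [/\ L 0, (forall x y, L x -> L y -> L (x + y)) & (forall (a : F) x, L x -> L (a *: x))].

Definition left_ideal (L : A -> Prop) : Prop :=
  subspace L /\ (forall a x, L x -> L (mul a x)).

Definition right_ideal (L : A -> Prop) : Prop :=
  subspace L /\ (forall a x, L x -> L (mul x a)).

Definition ideal (L : A -> Prop) : Prop := left_ideal L /\ right_ideal L.

Definition nonzero_set (L : A -> Prop) : Prop := exists x, L x /\ x <> 0.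
Definition zero_set (L : A -> Prop) : Prop := forall x, L x -> x = 0.
Definition proper_set (L : A -> Prop) : Prop := exists x, ~ L x.
Definition full_set (L : A -> Prop) : Prop := forall x, L x.
Definition set_sub (K L : A -> Prop) : Prop := forall x, K x -> L x.
Definition set_eq (K L : A -> Prop) : Prop := forall x, K x <-> L x.

Definition minimal_left_ideal (L : A -> Prop) : Prop :=
  [/\ left_ideal L, nonzero_set L &
      forall K, left_ideal K -> set_sub K L -> zero_set K \/ set_eq K L].
Definition maximal_left_ideal (L : A -> Prop) : Prop :=
  [/\ left_ideal L, proper_set L &
      forall K, left_ideal K -> set_sub L K -> set_eq K L \/ full_set K].
Definition minimal_right_ideal (L : A -> Prop) : Prop :=
  [/\ right_ideal L, nonzero_set L &
      forall K, right_ideal K -> set_sub K L -> zero_set K \/ set_eq K L].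
Definition maximal_right_ideal (L : A -> Prop) : Prop :=
  [/\ right_ideal L, proper_set L &
      forall K, right_ideal K -> set_sub L K -> set_eq K L \/ full_set K].

(* I^2 = 0 : the span of all products xy (x,y in I) is zero, i.e. all such
   products vanish *)
Definition square_zero (I : A -> Prop) : Prop :=
  forall x y, I x -> I y -> mul x y = 0.

Definition simple_algebra : Prop :=
  (exists x y : A, mul x y <> 0) /\
  (forall I, ideal I -> zero_set I \/ full_set I).

End AltAlg.

(* Main.v *)
Require Import Defs.
From HB Require Import structures.
From mathcomp Require Import all_boot all_order all_algebra.
From Stdlib Require Import Classical.
Set Implicit Arguments. Unset Strict Implicit. Unset Printing Implicit Defensive.
Import Order.TTheory GRing.Theory Num.Theory.
Local Open Scope ring_scope.

Lemma z1 (V : zmodType) (P Q R S U : V) : (P - Q) - (R - S) + (Q - U) = (S - U) + (P - R).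
Proof. rewrite opprB addrC !addrA -[Q - U + P]addrA [Q + _]addrC addrK.
rewrite [- U + P + S]addrC !addrA. done. Qed.

Definition fl (A : Type) (mul : A -> A -> A) := fun x y => mul y x.

Section Basic.
Variables (F : fieldType) (A : lmodType F) (mul : A -> A -> A) (one : A).
Hypothesis HA : unital_alt_algebra mul one.

Lemma mulDl x y z : mul (x + y) z = mul x z + mul y z.
Proof. case: HA => H _ _ _ _. have h := H 1 x y z; rewrite !scale1r in h; exact h. Qed.
Lemma mulDr x y z : mul z (x + y) = mul z x + mul z y.
Proof. case: HA => _ H _ _ _. have h := H 1 z x y; rewrite !scale1r in h; exact h. Qed.
Lemma mul0l z : mul 0 z = 0.
Proof. have h := mulDl 0 0 z; rewrite addr0 in h. apply: (addrI (mul 0 z)). by rewrite addr0 -h. Qed.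
Lemma mul0r z : mul z 0 = 0.
Proof. have h := mulDr 0 0 z; rewrite addr0 in h. apply: (addrI (mul z 0)). by rewrite addr0 -h. Qed.
Lemma mulNl x z : mul (- x) z = - mul x z.
Proof. apply: (addrI (mul x z)). by rewrite -mulDl !subrr mul0l. Qed.
Lemma mulNr x z : mul z (- x) = - mul z x.
Proof. apply: (addrI (mul z x)). by rewrite -mulDr !subrr mul0r. Qed.
Lemma mulBl x y z : mul (x - y) z = mul x z - mul y z.
Proof. by rewrite mulDl mulNl. Qed.
Lemma mulBr x y z : mul z (x - y) = mul z x - mul z y.
Proof. by rewrite mulDr mulNr. Qed.
Lemma mul1l x : mul one x = x. Proof. by case: HA => _ _ H _ _; case: (H x). Qed.
Lemma mul1r x : mul x one = x. Proof. by case: HA => _ _ H _ _; case: (H x). Qed.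
Lemma altl x y : assoc mul x x y = 0. Proof. by case: HA. Qed.
Lemma altr x y : assoc mul x y y = 0. Proof. by case: HA. Qed.

Lemma assocDl x y b c : assoc mul (x + y) b c = assoc mul x b c + assoc mul y b c.
Proof. by rewrite /assoc !(mulDl, mulDr) opprD addrACA. Qed.
Lemma assocDm x y a c : assoc mul a (x + y) c = assoc mul a x c + assoc mul a y c.
Proof. by rewrite /assoc !(mulDl, mulDr) opprD addrACA. Qed.
Lemma assocDr x y a b : assoc mul a b (x + y) = assoc mul a b x + assoc mul a b y.
Proof. by rewrite /assoc !(mulDl, mulDr) opprD addrACA. Qed.

Lemma swap12 a b c : assoc mul a b c = - assoc mul b a c.
Proof.
have h := altl (a + b) c. rewrite assocDl !assocDm !altl add0r addr0 in h.
by apply/eqP; rewrite -addr_eq0 h.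
Qed.
Lemma swap23 a b c : assoc mul a b c = - assoc mul a c b.
Proof.
have h := altr a (b + c). rewrite assocDm !assocDr !altr add0r addr0 in h.
by apply/eqP; rewrite -addr_eq0 h.
Qed.
Lemma cyc a b c : assoc mul a b c = assoc mul b c a.
Proof. by rewrite swap12 swap23 opprK. Qed.
Lemma swap13 a b c : assoc mul a b c = - assoc mul c b a.
Proof. by rewrite [assoc mul c b a]cyc swap12. Qed.

Lemma teich a b c d : assoc mul (mul a b) c d - assoc mul a (mul b c) d + assoc mul a b (mul c d)
  = mul a (assoc mul b c d) + mul (assoc mul a b c) d.
Proof. rewrite /assoc mulBr mulBl. exact: z1. Qed.

Lemma I1 a b c : assoc mul a b (mul b c) = mul (assoc mul a b c) b.
Proof.
have T1 := teich a b b c. have T2 := teich c a b b.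
rewrite altl altr mul0l mul0r addr0 in T1.
rewrite !altr mul0r !add0r in T2.
rewrite [assoc mul c (mul a b) b]cyc [assoc mul c a (mul b b)]cyc [assoc mul c a b]cyc in T2.
rewrite -T2. apply/eqP. rewrite -subr_eq0 -T1. apply/eqP.
by rewrite opprD opprK addrC.
Qed.

Lemma assoc_x1 a b : assoc mul a b one = 0.
Proof. by rewrite /assoc !mul1r subrr. Qed.

End Basic.

Lemma assoc_fl (F : fieldType) (A : lmodType F) (mul : A -> A -> A) a b c :
  assoc (fl mul) a b c = - assoc mul c b a.
Proof. by rewrite /assoc /fl opprB. Qed.

Lemma flip_alt (F : fieldType) (A : lmodType F) (mul : A -> A -> A) (one : A)
  (HA : unital_alt_algebra mul one) : unital_alt_algebra (fl mul) one.
Proof.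
split.
- move=> a x y z; rewrite /fl. by case: HA => _ H _ _ _; exact: H.
- move=> a x y z; rewrite /fl. by case: HA => H _ _ _ _; exact: H.
- move=> x; rewrite /fl; split; [exact: (mul1r HA) | exact: (mul1l HA)].
- by move=> x y; rewrite assoc_fl (altr HA) oppr0.
- by move=> x y; rewrite assoc_fl (altl HA) oppr0.
Qed.

Lemma I2 (F : fieldType) (A : lmodType F) (mul : A -> A -> A) (one : A)
  (HA : unital_alt_algebra mul one) a b c :
  assoc mul a b (mul c b) = mul b (assoc mul a b c).
Proof.
have h := I1 (flip_alt HA) a b c.
rewrite (assoc_fl mul a b) (assoc_fl mul a b c) /fl (mulNr HA) in h. have h' := oppr_inj h.
rewrite (swap13 HA a b (mul c b)) h' (swap13 HA c b a) (mulNr HA) opprK //.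
Qed.

Lemma ip_r (F : fieldType) (A : lmodType F) (mul : A -> A -> A) (one : A)
  (HA : unital_alt_algebra mul one) u v y :
  mul u v = one -> mul v u = one -> mul (mul y v) u = y.
Proof.
move=> huv hvu.
have h1 : mul (assoc mul y v u) v = 0 by rewrite -(I1 HA) hvu (assoc_x1 HA).
have h2 : mul (assoc mul y v u) u = 0.
  apply/eqP; rewrite -oppr_eq0 -(mulNl HA) -(swap23 HA) -(I1 HA) huv (assoc_x1 HA) //.
have h3 : mul v (assoc mul y v u) = 0 by rewrite -(I2 HA) huv (assoc_x1 HA).
have h4 : mul u (assoc mul y v u) = 0.
  apply/eqP; rewrite -oppr_eq0 -(mulNr HA) -(swap23 HA) -(I2 HA) hvu (assoc_x1 HA) //.
have h : assoc mul u (assoc mul y v u) v = 0 by rewrite /assoc h4 h1 (mul0l HA) (mul0r HA) subrr.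
have h5 : - (mul (mul u v) (assoc mul y v u) - mul u (mul v (assoc mul y v u))) = 0.
  by rewrite -[RHS]h (swap23 HA u _ v).
rewrite huv h3 (mul1l HA) (mul0r HA) subr0 in h5.
move/eqP: h5; rewrite oppr_eq0 => /eqP he.
move/subr0_eq: he; rewrite hvu (mul1r HA) //.
Qed.

Lemma ip_l (F : fieldType) (A : lmodType F) (mul : A -> A -> A) (one : A)
  (HA : unital_alt_algebra mul one) u v y :
  mul u v = one -> mul v u = one -> mul u (mul v y) = y.
Proof. move=> huv hvu. exact: (@ip_r _ _ _ _ (flip_alt HA) u v y hvu huv). Qed.

Lemma flip_dv (F : fieldType) (A : lmodType F) (mul : A -> A -> A) (one : A) d :
  deriv_inv_values mul one d -> deriv_inv_values (fl mul) one d.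
Proof.
case=> [[Hl Hm] Hn Hi]; split => //.
- split => // x y; rewrite /fl Hm addrC //.
- move=> x; case: (Hi x) => [[b [h1 h2]]|h]; [left; exists b; split => // | by right].
Qed.

Lemma nonzero_of (F : fieldType) (A : lmodType F) (K : A -> Prop) :
  ~ zero_set K -> nonzero_set K.
Proof.
move=> H; apply: NNPP => H2; apply: H => x Kx; apply: NNPP => nx; apply: H2; by exists x.
Qed.

Lemma proper_of (F : fieldType) (A : lmodType F) (K : A -> Prop) :
  ~ full_set K -> proper_set K.
Proof.
move=> H; apply: NNPP => H2; apply: H => x; apply: NNPP => nx; apply: H2; by exists x.
Qed.

Section Main.
Variables (F : fieldType) (A : lmodType F) (mul : A -> A -> A) (one : A).
Hypothesis HA : unital_alt_algebra mul one.
Variable d : A -> A.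
Hypothesis Hd : deriv_inv_values mul one d.

Lemma dD x y : d (x + y) = d x + d y.
Proof. case: Hd => [[H _] _ _]. have h := H 1 x y; rewrite !scale1r in h; exact h. Qed.
Lemma d0 : d 0 = 0.
Proof. have h := dD 0 0; rewrite addr0 in h. apply: (addrI (d 0)). by rewrite addr0 -h. Qed.
Lemma dN x : d (- x) = - d x.
Proof. apply: (addrI (d x)). by rewrite -dD !subrr d0. Qed.
Lemma dB x y : d (x - y) = d x - d y.
Proof. by rewrite dD dN. Qed.
Lemma dM x y : d (mul x y) = mul (d x) y + mul x (d y).
Proof. by case: Hd => [[_ H] _ _]. Qed.

Lemma partA_left L : left_ideal mul L -> nonzero_set L -> exists x, L x /\ d x <> 0.
Proof.
move=> [_ HL] [x0 [Lx0 nx0]].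
apply: NNPP => H.
have hz : forall x, L x -> d x = 0.
  move=> x Lx; apply: NNPP => nz; apply: H; by exists x.
case: (Hd) => _ [a na] Hinv.
case: (Hinv a) => [[v [huv hvu]]|//].
apply: nx0.
have h : mul (d a) x0 = 0.
  have := hz _ (HL a x0 Lx0). by rewrite dM (hz _ Lx0) (mul0r HA) addr0.
by rewrite -(@ip_l _ _ _ _ HA v (d a) x0 hvu huv) h (mul0r HA).
Qed.

Lemma key_left K : left_ideal mul K -> nonzero_set K ->
  forall y, exists k1 k2, K k1 /\ K k2 /\ y = d k1 - k2.
Proof.
move=> HK nK y. have [k [Kk nk]] := partA_left HK nK.
case: (Hd) => _ _ Hinv. case: (Hinv k) => [[v [huv hvu]]|//].
exists (mul (mul y v) k), (mul (d (mul y v)) k).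
split; first exact: HK.2 _ _ Kk. split; first exact: HK.2 _ _ Kk.
by rewrite dM (@ip_r _ _ _ _ HA (d k) v y huv hvu) [mul (d _) k + y]addrC addrK.
Qed.

Lemma no_inv_proper L : left_ideal mul L -> proper_set L ->
  forall w, L w -> invertible mul one w -> False.
Proof.
move=> [_ HL] [z nz] w Lw [b [hwb hbw]]. apply: nz.
rewrite -(mul1r HA z). apply: (HL). rewrite -hbw. exact: (HL).
Qed.

Lemma sub_eq_left K L : left_ideal mul K -> proper_set K ->
  left_ideal mul L -> nonzero_set L -> set_sub L K -> set_eq L K.
Proof.
move=> HK pK HL nL sLK y; split; first exact: sLK.
move=> Ky. have [k1 [k2 [Lk1 [Lk2 ey]]]] := key_left HL nL y.
case: (HK) => [[_ KD _] _]. case: (HL) => [[_ _ LZ] _].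
have hdk : K (d k1).
  have -> : d k1 = y + k2 by rewrite ey subrK.
  apply: KD => //; exact: sLK.
case: (Hd) => _ _ Hinv.
case: (Hinv k1) => [hi | h0].
  exfalso; exact: (no_inv_proper HK pK hdk hi).
rewrite ey h0 sub0r -scaleN1r. exact: LZ.
Qed.

Lemma partB_left L : left_ideal mul L -> nonzero_set L -> proper_set L ->
  minimal_left_ideal mul L /\ maximal_left_ideal mul L.
Proof.
move=> HL nL pL; split.
- split => // K HK sKL. case: (classic (zero_set K)) => [z|nz]; [by left|right].
  have nK := nonzero_of nz.
  exact: (sub_eq_left HL pL HK nK sKL).
- split => // K HK sLK. case: (classic (full_set K)) => [f|nf]; [by right|left].
  have pK := proper_of nf.
  have e := sub_eq_left HK pK HL nL sLK.
  move=> x; exact: iff_sym (e x).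
Qed.

Lemma partC I : ideal mul I -> proper_set I -> square_zero mul I.
Proof.
move=> [[HS HL] [_ HR]] pI x y Ix Iy.
case: (Hd) => _ [a na] Hinv.
have hxy : forall p q, I p -> I q -> d (mul p q) = 0.
  move=> p q Ip Iq. case: (Hinv (mul p q)) => [hi|//]. exfalso.
  apply: (no_inv_proper (conj HS HL) pI _ hi). rewrite dM.
  case: HS => _ Hadd _. apply: Hadd; [exact: HL | exact: HR].
case: (Hinv a) => [[v [huv hvu]]|//].
have key : d (mul a (mul x y)) = 0.
  have e : mul a (mul x y) = mul (mul a x) y + (mul (mul x a) y - mul x (mul a y)).
    change (mul a (mul x y) = mul (mul a x) y + assoc mul x a y).
    by rewrite (swap12 HA x a y) /assoc opprB addrC subrK.
  rewrite e dD dB (hxy _ _ (HL a x Ix) Iy) (hxy _ _ (HR a x Ix) Iy).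
  by rewrite (hxy _ _ Ix (HL a y Iy)) subrr addr0.
rewrite dM (hxy _ _ Ix Iy) (mul0r HA) addr0 in key.
by rewrite -(@ip_l _ _ _ _ HA v (d a) (mul x y) hvu huv) key (mul0r HA).
Qed.

Lemma partD : (2 \notin [pchar F])%N -> simple_algebra mul.
Proof.
move=> h2. have h2' : (2%:R : F) != 0 by move: h2; rewrite inE /=.
case: (Hd) => Hder [a0 na0] Hinv.
have one0 : one <> 0.
  move=> e. apply: na0. by rewrite -(mul1l HA (d a0)) e (mul0l HA).
split.
  exists one, one. by rewrite (mul1l HA).
move=> I HI. case: (classic (full_set I)) => [f|nf]; [by right|left].
have pI := proper_of nf.
have sq := partC HI pI.
move=> z Iz. apply: NNPP => nz.
have [x [Ix nx]] := partA_left HI.1 (ex_intro _ z (conj Iz nz)).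
case: (Hinv x) => [[v [huv hvu]]|//].
have HL := HI.1.2.
have e2 : d (mul x (mul v x)) = 0 by rewrite (sq x (mul v x) Ix (HL v x Ix)) d0.
rewrite dM dM (@ip_l _ _ _ _ HA (d x) v x huv hvu) (mulDr HA) (sq _ _ Ix (HL _ _ Ix)) hvu (mul1r HA) add0r in e2.
have : (2%:R : F) *: x = 0 by rewrite scaler_nat mulr2n.
move/eqP; rewrite scaler_eq0 (negbTE h2') /= => /eqP x0.
apply: nx; by rewrite x0 d0.
Qed.

End Main.

Theorem lemma1p3 (F : fieldType) (A : lmodType F) (mul : A -> A -> A) (one : A)
    (HA : unital_alt_algebra mul one) (d : A -> A) (Hd : deriv_inv_values mul one d) :
  (* (a) *)
  (forall L : A -> Prop, (left_ideal mul L \/ right_ideal mul L) -> nonzero_set L ->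
     exists x, L x /\ d x <> 0) /\
  (* (b) *)
  (forall L : A -> Prop, left_ideal mul L -> nonzero_set L -> proper_set L ->
     minimal_left_ideal mul L /\ maximal_left_ideal mul L) /\
  (forall L : A -> Prop, right_ideal mul L -> nonzero_set L -> proper_set L ->
     minimal_right_ideal mul L /\ maximal_right_ideal mul L) /\
  (* (c) *)
  (forall I : A -> Prop, ideal mul I -> proper_set I -> square_zero mul I) /\
  (* (d) *)
  ((2 \notin [pchar F])%N -> simple_algebra mul).
Proof.
have HA' := flip_alt HA. have Hd' := flip_dv Hd.
split.
  move=> L [HL|HL] nL; first exact: (partA_left HA Hd HL nL).
  exact: (partA_left HA' Hd' (L:=L) HL nL).
split; first by move=> L; exact: (partB_left HA Hd).
split; first by move=> L HL nL pL; exact: (partB_left HA' Hd' (L:=L) HL nL pL).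
split; first by move=> I; exact: (partC HA Hd).
exact: (partD HA Hd).
Qed.
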